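(* Let $\mathbb{K}$ be a field and $f=a_0(x)+a_1(x)y+\cdots+a_n(x)y^n\in\mathbb{K}[x,y]$ with $n\geq 2$, $a_0,\ldots,a_n\in\mathbb{K}[x]$, $a_0a_n\neq 0$, such that $f$ has no nonconstant factor in $\mathbb{K}[x]$ and $\deg a_0>\max\{\deg a_1,\ldots,\deg a_n\}$. If $a_0$ is irreducible in $\mathbb{K}[x]$, or if $a_n$ is irreducible in $\mathbb{K}[x]$ and $\deg a_n\geq\deg a_0-\deg q$ with $q\in\mathbb{K}[x]$ an irreducible factor of $a_0$ of smallest degree, then $f$ is irreducible over $\mathbb{K}[x]$.
   Context: $f$ is regarded as a polynomial in $y$ with coefficients in $\mathbb{K}[x]$; irreducibility over $\mathbb{K}[x]$ means irreducibility in $\mathbb{K}[x][y]$. *)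

(* Defs.v *)
From HB Require Import structures.
From mathcomp Require Import all_boot all_order all_algebra.
Set Implicit Arguments. Unset Strict Implicit. Unset Printing Implicit Defensive.
Import GRing.Theory.
Local Open Scope ring_scope.

Definition irreducible_in (R : idomainType) (p : R) : Prop :=
  p != 0 /\ p \isn't a GRing.unit /\
  forall g h : R, p = g * h -> g \is a GRing.unit \/ h \is a GRing.unit.

(* Main.v *)
Require Import Defs.
From HB Require Import structures.
From mathcomp Require Import all_boot all_order all_algebra.
From mathcomp Require Import zify.
From Stdlib Require Import Classical.
Set Implicit Arguments. Unset Strict Implicit.
Import GRing.Theory.
Local Open Scope ring_scope.

Section Aux.
Variable K : fieldType.

Lemma coefM_top (b c : {poly K}) (m k : nat) :
  (size b <= m.+1)%N -> (size c <= k.+1)%N -> (b * c)`_(m + k) = b`_m * c`_k.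
Proof.
move=> hb hc.
have [eb|lb] := eqVneq (size b) m.+1; last first.
  have hb' : (size b <= m)%N by move: lb hb; lia.
  rewrite [b`_m]nth_default // mul0r nth_default //.
  apply: leq_trans (size_polyMleq _ _) _; lia.
have [ec|lc] := eqVneq (size c) k.+1; last first.
  have hc' : (size c <= k)%N by move: lc hc; lia.
  rewrite [c`_k]nth_default // mulr0 nth_default //.
  apply: leq_trans (size_polyMleq _ _) _; lia.
have b0 : b != 0 by rewrite -size_poly_gt0 eb.
have c0 : c != 0 by rewrite -size_poly_gt0 ec.
have := lead_coefM b c; rewrite /lead_coef size_mul // eb ec /=.
rewrite /= => <-; congr (_ `_ _); lia.
Qed.

Lemma Tmul (g h : {poly {poly K}}) (m k : nat) :
  (forall i, (size (g`_i)%R <= m.+1)%N) -> (forall j, (size (h`_j)%R <= k.+1)%N) ->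
  map_poly (coefp (m + k)) (g * h) = map_poly (coefp m) g * map_poly (coefp k) h.
Proof.
move=> hg hh; apply/polyP => i.
rewrite coef_map_id0; last by rewrite /= polyseq0 nth_nil.
rewrite !coefM raddf_sum; apply: eq_bigr => j _.
rewrite !coef_map_id0 ?raddf0 //; exact: coefM_top (hg _) (hh _).
Qed.

Definition mx (p : {poly {poly K}}) := (\max_(i < size p) size (p`_i)%R)%N.

Lemma mx_ub (p : {poly {poly K}}) (i : nat) : (size (p`_i)%R <= mx p)%N.
Proof.
have [lt|ge] := ltnP i (size p).
  by apply: (@leq_bigmax_cond _ xpredT (fun i : 'I_(size p) => size p`_i) (Ordinal lt)).
by rewrite nth_default // size_poly0.
Qed.

Lemma mx_arg (p : {poly {poly K}}) : p != 0 -> exists i, size p`_i = mx p /\ (0 < mx p)%N.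
Proof.
move=> p0.
have sp : (0 < size p)%N by rewrite size_poly_gt0.
exists [arg max_(i > Ordinal sp) size p`_i]; split.
  by rewrite /mx (bigmax_eq_arg (Ordinal sp)).
apply: leq_trans (mx_ub p (size p).-1).
by rewrite size_poly_gt0 -/(lead_coef p) lead_coef_eq0.
Qed.

Lemma T_neq0 (p : {poly {poly K}}) : p != 0 -> map_poly (coefp (mx p).-1) p != 0.
Proof.
move=> /mx_arg [i [hi hm]]; apply/eqP => e.
have := congr1 (fun q : {poly K} => q`_i) e.
rewrite coef_map coef0 /= => /eqP; apply/negP.
have -> : (mx p).-1 = (size p`_i).-1 by rewrite hi.
rewrite -/(lead_coef _) lead_coef_eq0 -size_poly_gt0 hi //.
Qed.

Definition Pdom (p : {poly {poly K}}) := forall i, (0 < i)%N -> (size (p`_i)%R < size (p`_0)%R)%N.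

Lemma keyP (g h : {poly {poly K}}) : g * h != 0 -> Pdom (g * h) -> Pdom g.
Proof.
move=> f0 Pf.
have g0 : g != 0 by apply: contraNneq f0 => ->; rewrite mul0r.
have h0 : h != 0 by apply: contraNneq f0 => ->; rewrite mulr0.
have [i0 [hi0 mg0]] := mx_arg g0.
have [j0 [hj0 mh0]] := mx_arg h0.
set m := (mx g).-1; set k := (mx h).-1.
have ubg : forall i, (size (g`_i)%R <= m.+1)%N by move=> i; rewrite /m prednK // mx_ub.
have ubh : forall i, (size (h`_i)%R <= k.+1)%N by move=> i; rewrite /k prednK // mx_ub.
have TM := Tmul ubg ubh.
have Tg0 := T_neq0 g0; have Th0 := T_neq0 h0.
have Tf0 : map_poly (coefp (m + k)) (g * h) != 0 by rewrite TM mulf_neq0.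
have A_le : (size ((g * h)`_0)%R <= (m + k).+1)%N.
  rewrite coef0M; apply: leq_trans (size_polyMleq _ _) _.
  have := ubg 0%N; have := ubh 0%N; lia.
have A_eq : (size ((g * h)`_0)%R = (m + k).+1)%N.
  apply/eqP; rewrite eqn_leq A_le /=; rewrite ltnNge; apply/negP => hA.
  move/negP: Tf0; apply; apply/eqP/polyP => i; rewrite coef_map coef0 /=.
  apply: nth_default; case: i => [|i]; first by [].
  have h1 := Pf i.+1 isT; apply: leq_trans hA; exact: ltnW h1.
have sTf : (size (map_poly (coefp (m + k)) (g * h)) <= 1)%N.
  apply/leq_sizeP => j hj; rewrite coef_map /=; apply: nth_default.
  by rewrite -ltnS -A_eq; exact: Pf j hj.
rewrite TM size_mul // in sTf.
have sTh : (0 < size (map_poly (coefp k) h))%N by rewrite size_poly_gt0.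
have sTg : (size (map_poly (coefp m) g) <= 1)%N.
  move: sTf; rewrite -(prednK sTh) addnS /=; apply: leq_trans; exact: leq_addr.
have z : forall i, (0 < i)%N -> (g`_i)`_m = 0.
  by move=> i hi; move/leq_sizeP: sTg => /(_ i hi); rewrite coef_map.
have i00 : i0 = 0%N.
  case: i0 hi0 => [//|i] hi; exfalso.
  have := z i.+1 isT.
  have -> : m = (size g`_i.+1).-1 by rewrite hi.
  move/eqP; rewrite -/(lead_coef _) lead_coef_eq0 => /eqP e.
  by move: hi; rewrite e size_poly0 => hh; move: mg0; rewrite -hh.
move: hi0; rewrite i00 => hi0 i hi.
rewrite hi0.
have : (size (g`_i)%R <= m)%N.
  apply/leq_sizeP => j; rewrite leq_eqVlt => /orP [/eqP <-|hj]; first exact: z.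
  by apply: nth_default; apply: leq_trans (ubg i) hj.
move=> H; apply: leq_ltn_trans H _; by rewrite /m ltn_predL.
Qed.


Lemma irr_factor_n (n : nat) (p : {poly K}) : (size p <= n)%N -> (1 < size p)%N ->
  exists r : {poly K}, [/\ irreducible_poly r, r %| p & (size r <= size p)%N].
Proof.
elim: n p => [|n IH] p hs h1; first by move: hs h1; lia.
have [irr|nirr] := Classical_Prop.classic (irreducible_poly p).
  by exists p; split => //; rewrite dvdpp.
have : ~ (forall q : {poly K}, size q != 1%N -> q %| p -> q %= p).
  by move=> H; apply: nirr; split.
move/Classical_Pred_Type.not_all_ex_not => [q hq].
have [sq1 qp nqp] : [/\ size q != 1%N, q %| p & ~~ (q %= p)].
  split.
  - apply/negP => /eqP e; apply: hq; by rewrite e eqxx.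
  - case: (boolP (q %| p)) => // e; exfalso; apply: hq => _ H; by rewrite H in e.
  - apply/negP => e; apply: hq => _ _; exact: e.
have p0 : p != 0 by rewrite -size_poly_gt0; apply: ltnW.
have q0 : q != 0 by apply: contraNneq p0 => e; move: qp; rewrite e dvd0p.
have sqp := dvdp_leq p0 qp.
have sqp' : size q != size p by rewrite dvdp_size_eqp.
have sq2 : (1 < size q)%N.
  by move: sq1; rewrite -size_poly_gt0 in q0; move: q0; lia.
have sqn : (size q <= n)%N.
  have : (size q < size p)%N by rewrite ltn_neqAle sqp' sqp.
  move=> H; exact: leq_trans H hs.
have [r [ir rq sr]] := IH q sqn sq2.
by exists r; split => //; [exact: dvdp_trans qp | exact: leq_trans sqp].
Qed.

Lemma irr_factor (p : {poly K}) : (1 < size p)%N ->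
  exists r : {poly K}, [/\ irreducible_poly r, r %| p & (size r <= size p)%N].
Proof. exact: (@irr_factor_n (size p)). Qed.


Lemma predlt (n i : nat) : (n.-1 < i)%N -> (n <= i)%N.
Proof. lia. Qed.

Lemma nf2 (a b s : nat) : a = (a + b).-1 -> (0 < s)%N -> (s < b)%N -> False.
Proof. lia. Qed.
Lemma nf3 (a b : nat) : a = (a + b).-1 -> (0 < b)%N -> b = 1%N.
Proof. lia. Qed.

Lemma nat_fact (a B C R Q : nat) : (a < B)%N -> (1 < C)%N -> (R <= C)%N -> (Q <= R)%N -> (0 < a)%N ->
  ((B + C).-2 - Q.-1 <= (a + 1).-2)%N -> False.
Proof. lia. Qed.

Lemma contra_case (f g h : {poly {poly K}}) :
  f = g * h -> (1 < size g)%N -> (1 < size h)%N -> Pdom g -> Pdom h ->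
  size (lead_coef h) = 1%N ->
  (exists q : {poly K},
      [/\ irreducible_poly q, q %| f`_0,
          (forall r : {poly K}, irreducible_poly r -> r %| f`_0 -> (size q <= size r)%N)
        & ((size (f`_0)%R).-1 - (size q).-1 <= (size (lead_coef f)).-1)%N]) -> False.
Proof.
move=> -> sg sh Pg Ph slh [q [iq qa qmin ineq]].
have g0 : g != 0 by rewrite -size_poly_gt0; apply: ltnW.
have h0 : h != 0 by rewrite -size_poly_gt0; apply: ltnW.
have lg0 : lead_coef g != 0 by rewrite lead_coef_eq0.
have lh0 : lead_coef h != 0 by rewrite lead_coef_eq0.
have Pg1 : (size (lead_coef g) < size (g`_0)%R)%N.
  rewrite /lead_coef; apply: Pg; lia.
have Ph1 : (size (lead_coef h) < size (h`_0)%R)%N.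
  rewrite /lead_coef; apply: Ph; lia.
have slg : (0 < size (lead_coef g))%N by rewrite size_poly_gt0.
have b00 : g`_0 != 0 by rewrite -size_poly_gt0; apply: leq_ltn_trans Pg1.
have c00 : h`_0 != 0 by rewrite -size_poly_gt0; apply: leq_ltn_trans Ph1.
have sc2 : (1 < size (h`_0)%R)%N by move: Ph1; rewrite slh.
have [r [ir rc sr]] := irr_factor sc2.
have ra : r %| (g * h)`_0 by rewrite coef0M; apply: dvdp_mull.
have sqr := qmin r ir ra.
move: ineq; rewrite coef0M lead_coefM size_mul // size_mul // slh.
apply: (nat_fact Pg1 sc2 sr sqr slg).
Qed.

End Aux.

Theorem corollary3 (K : fieldType) (f : {poly {poly K}}) :
  (2 <= (size f).-1)%N ->
  f`_0 * lead_coef f != 0 ->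
  (forall (d : {poly K}) (g : {poly {poly K}}), f = d%:P * g -> (size d <= 1)%N) ->
  (forall i : nat, (0 < i <= (size f).-1)%N -> (size (f`_i)%R < size (f`_0)%R)%N) ->
  (irreducible_poly f`_0 \/
   (irreducible_poly (lead_coef f) /\
    exists q : {poly K},
      [/\ irreducible_poly q, q %| f`_0,
          (forall r : {poly K}, irreducible_poly r -> r %| f`_0 -> (size q <= size r)%N)
        & ((size (f`_0)%R).-1 - (size q).-1 <= (size (lead_coef f)).-1)%N])) ->
  irreducible_in f.
Proof.
move=> hn h0n hprim hdeg hirr.
have a00 : f`_0 != 0 by apply: contraNneq h0n => ->; rewrite mul0r.
have an0 : lead_coef f != 0 by apply: contraNneq h0n => ->; rewrite mulr0.
have f0 : f != 0 by rewrite -lead_coef_eq0.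
have Pf : Pdom f.
  move=> i hi; have [le|gt] := leqP i (size f).-1; first by apply: hdeg; rewrite hi le.
  rewrite nth_default; last exact: predlt gt.
  by rewrite size_poly0 size_poly_gt0.
have cst : forall g h, f = g * h -> (size g <= 1)%N -> g \is a GRing.unit.
  move=> g h e sg.
  have g0 : g != 0 by apply: contraNneq f0; rewrite e => ->; rewrite mul0r.
  have eg := size1_polyC sg.
  have sg0 : (size (g`_0)%R <= 1)%N by apply: (hprim _ h); rewrite e {1}eg.
  have g00 : g`_0 != 0 by apply: contraNneq g0 => e0; rewrite eg e0.
  have sg1 : size g = 1%N by move: sg; rewrite -size_poly_gt0 in g0; move: g0; lia.
  have sg01 : size g`_0 = 1%N by move: sg0; rewrite -size_poly_gt0 in g00; move: g00; lia.
  rewrite poly_unitE sg1 eqxx /= poly_unitE sg01 eqxx /= unitfE.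
  have -> : (g`_0)`_0 = lead_coef g`_0 by rewrite /lead_coef sg01.
  by rewrite lead_coef_eq0.
split => //; split.
  by rewrite poly_unitE negb_and; apply/orP; left; apply/eqP => e1; move: hn; rewrite e1.
move=> g h e.
have [sg|sg] := leqP (size g) 1; first by left; exact: cst e sg.
have [sh|sh] := leqP (size h) 1; first by right; apply: (cst h g _ sh); rewrite e mulrC.
exfalso.
have f0' : g * h != 0 by rewrite -e.
have Pf' : Pdom (g * h) by rewrite -e.
have Pg := keyP f0' Pf'.
have Ph : Pdom h by apply: (@keyP K h g); rewrite mulrC.
have g0 : g != 0 by rewrite -size_poly_gt0; apply: ltnW.
have h0 : h != 0 by rewrite -size_poly_gt0; apply: ltnW.
have Pg1 : (size (lead_coef g) < size (g`_0)%R)%N.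
  rewrite /lead_coef; apply: Pg; lia.
have Ph1 : (size (lead_coef h) < size (h`_0)%R)%N.
  rewrite /lead_coef; apply: Ph; lia.
have slg : (0 < size (lead_coef g))%N by rewrite size_poly_gt0 lead_coef_eq0.
have slh : (0 < size (lead_coef h))%N by rewrite size_poly_gt0 lead_coef_eq0.
have b00 : g`_0 != 0 by rewrite -size_poly_gt0; apply: leq_ltn_trans Pg1.
have c00 : h`_0 != 0 by rewrite -size_poly_gt0; apply: leq_ltn_trans Ph1.
case: hirr => [ia0|[ian hq]].
  have sb : size g`_0 != 1%N by move: slg Pg1; lia.
  have := ia0 _ sb; rewrite e coef0M dvdp_mulIl => /(_ isT) /eqp_size.
  rewrite size_mul // => E; exact: nf2 E slh Ph1.
have : size (lead_coef g) = 1%N \/ size (lead_coef h) = 1%N.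
  have [e1|n1] := eqVneq (size (lead_coef g)) 1%N; first by left.
  right; have := ian _ n1; rewrite e lead_coefM dvdp_mulIl => /(_ isT) /eqp_size.
  rewrite size_mul ?lead_coef_eq0 // => E; exact: nf3 E slh.
case=> [l1|l1].
  by apply: (@contra_case K f h g) => //; rewrite e mulrC.
exact: (@contra_case K f g h).
Qed.
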